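(* Let $S=(P,L)$ be a finite $(2,t)$-generalized quadrangle and let $(R,\psi)$ be a faithful representation of $S$, with $\psi(x)=\langle r_x\rangle$ and $R_\psi=\{r_x:x\in P\}$. If $S$ contains a $3$-arc $T=\{a,b,c\}$ such that $r_ar_br_c\in R_\psi$, then $(t,|R|)=(2,2^4)$; moreover, $T$ is not complete.
   Context: A $(2,t)$-generalized quadrangle is a partial linear space in which every line has exactly $3$ points, every point lies on exactly $t+1$ lines, no point is collinear with all points, and for every point $x$ and line $\ell$ with $x\notin\ell$, $x$ is collinear with exactly one point of $\ell$. A $k$-arc is a set of $k$ pairwise non-collinear points; it is complete if it is not contained in a $(k+1)$-arc. A representation $(R,\psi)$ of $S$ is a group $R$ with a map $\psi$ assigning to each point $x$ a subgroup $\psi(x)=\langle r_x\rangle$ of order $2$, such that $R$ is generated by the $r_x$ and, for every line $\{x,y,z\}$, $\{1,r_x,r_y,r_z\}$ is a Klein four subgroup. It is faithful if $\psi$ is injective. *)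

(* Defs.v *)
From HB Require Import structures.
From mathcomp Require Import all_boot.
Set Implicit Arguments. Unset Strict Implicit. Unset Printing Implicit Defensive.
(** Point-line geometries: points form a finite type [P]; lines are given as
    a set [L] of subsets of [P] (each line is identified with its point set). *)

Section GQ.
Variable P : finType.
Variable L : {set {set P}}.

Definition collinear (x y : P) : bool :=
  (x != y) && [exists l in L, (x \in l) && (y \in l)].

Definition is_GQ2 (t : nat) : Prop :=
  [/\
      (forall l, l \in L -> #|l| = 3),
      (forall x : P, #|[set l in L | x \in l]| = t.+1),
      (forall l1 l2 x y, l1 \in L -> l2 \in L -> x != y ->
         x \in l1 -> y \in l1 -> x \in l2 -> y \in l2 -> l1 = l2),
      (forall x : P, exists y : P, y != x /\ ~~ collinear x y) &
      (forall x l, l \in L -> x \notin l -> #|[set y in l | collinear x y]| = 1)].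

Definition is_arc (A : {set P}) : Prop :=
  forall x y, x \in A -> y \in A -> x != y -> ~~ collinear x y.

Definition is_karc (k : nat) (A : {set P}) : Prop := is_arc A /\ #|A| = k.

Definition complete_karc (k : nat) (A : {set P}) : Prop :=
  is_karc k A /\ ~ (exists B : {set P}, is_karc k.+1 B /\ A \subset B).

End GQ.

Section Rep.
Local Open Scope group_scope.
Variables (P : finType) (L : {set {set P}}) (R : groupType) (r : P -> R).

Inductive gen_by : R -> Prop :=
  | gen_r x : gen_by (r x)
  | gen_1 : gen_by 1
  | gen_mul g h : gen_by g -> gen_by h -> gen_by (g * h)
  | gen_inv g : gen_by g -> gen_by g^-1.

Definition klein4 (a b c : R) : Prop :=
  let K := [:: 1; a; b; c] in
  [/\ uniq K,
      (forall g h, g \in K -> h \in K -> g * h \in K),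
      (forall g, g \in K -> g^-1 \in K) &
      (forall g, g \in K -> g * g = 1)].

(** psi x = <r x> = {1, r x} when r x has order 2 *)
Definition psi (x : P) : pred R := [pred g | (g == 1) || (g == r x)].

Definition is_representation : Prop :=
  [/\
      (forall x, r x != 1 /\ r x * r x = 1),
      (forall g : R, gen_by g) &
      (forall l x y z, l \in L -> l = [set x; y; z] ->
         x != y -> y != z -> x != z -> klein4 (r x) (r y) (r z))].

Definition faithful : Prop := forall x y, psi x =i psi y -> x = y.

End Rep.

(** |G| = n for a (possibly infinite a priori) group type *)
Definition has_order (G : Type) (n : nat) : Prop :=
  exists f : 'I_n -> G, bijective f.

(* Main.v *)
Require Import Defs.
From HB Require Import structures.
From mathcomp Require Import all_boot.
Set Implicit Arguments. Unset Strict Implicit. Unset Printing Implicit Defensive.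
Local Open Scope group_scope.

Section Abs.
Variables (G : groupType) (a b c d : G).
Hypotheses (ha : a * a = 1) (hb : b * b = 1) (hc : c * c = 1) (hd : d * d = 1).
Hypotheses (cab : commute a b) (cac : commute a c) (cad : commute a d)
  (cbc : commute b c) (cbd : commute b d) (ccd : commute c d).

Definition pw (g : G) (x : bool) := if x then g else 1.
Definition F e0 e1 e2 e3 := pw a e0 * pw b e1 * pw c e2 * pw d e3.

Lemma pw_comm g h x y : commute g h -> commute (pw g x) (pw h y).
Proof. by case: x; case: y => //= _; rewrite /commute ?mulg1 ?mul1g. Qed.

Lemma pwpw g x y : g * g = 1 -> pw g x * pw g y = pw g (x (+) y).
Proof. by case: x; case: y => //= h; rewrite ?mulg1 ?mul1g. Qed.


Lemma La x e0 e1 e2 e3 : pw a x * F e0 e1 e2 e3 = F (x (+) e0) e1 e2 e3.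
Proof. by rewrite /F !mulgA pwpw. Qed.

Lemma Lb x e0 e1 e2 e3 : pw b x * F e0 e1 e2 e3 = F e0 (x (+) e1) e2 e3.
Proof.
rewrite /F !mulgA (pw_comm x e0 (commute_sym cab)).
by rewrite -(mulgA (pw a e0)) pwpw.
Qed.

Lemma Lc x e0 e1 e2 e3 : pw c x * F e0 e1 e2 e3 = F e0 e1 (x (+) e2) e3.
Proof.
rewrite /F !mulgA (pw_comm x e0 (commute_sym cac)).
rewrite -(mulgA (pw a e0) (pw c x)) (pw_comm x e1 (commute_sym cbc)).
by rewrite !mulgA -(mulgA (pw a e0 * pw b e1)) pwpw.
Qed.

Lemma Ld x e0 e1 e2 e3 : pw d x * F e0 e1 e2 e3 = F e0 e1 e2 (x (+) e3).
Proof.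
rewrite /F !mulgA (pw_comm x e0 (commute_sym cad)).
rewrite -(mulgA (pw a e0) (pw d x)) (pw_comm x e1 (commute_sym cbd)).
rewrite !mulgA -(mulgA (pw a e0 * pw b e1) (pw d x)) (pw_comm x e2 (commute_sym ccd)).
by rewrite !mulgA -(mulgA (pw a e0 * pw b e1 * pw c e2)) pwpw.
Qed.

Lemma Fmul e0 e1 e2 e3 f0 f1 f2 f3 :
  F e0 e1 e2 e3 * F f0 f1 f2 f3 = F (e0 (+) f0) (e1 (+) f1) (e2 (+) f2) (e3 (+) f3).
Proof. by rewrite {1}/F -!mulgA Ld Lc Lb La. Qed.


Lemma F0 : F false false false false = 1.
Proof. by rewrite /F /= !mulg1. Qed.

Lemma recon {n : nat} : (n < 16)%N ->
  n = (odd n + 2 * odd (n %/ 2) + 4 * odd (n %/ 4) + 8 * odd (n %/ 8))%N.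
Proof. by do 16! (case: n => [|n] //). Qed.

Lemma bits_inj : injective (fun i : 'I_16 => (odd i, odd (i %/ 2), odd (i %/ 4), odd (i %/ 8))).
Proof.
move=> i j [h0 h1 h2 h3]; apply: val_inj => /=.
by rewrite (recon (ltn_ord i)) [in RHS](recon (ltn_ord j)) h0 h1 h2 h3.
Qed.

Lemma order16 :
  (forall g, exists e0 e1 e2 e3, g = F e0 e1 e2 e3) ->
  (forall e0 e1 e2 e3, F e0 e1 e2 e3 = 1 -> [&& ~~ e0, ~~ e1, ~~ e2 & ~~ e3]) ->
  has_order G 16.
Proof.
move=> surj nz.
pose f (i : 'I_16) := F (odd i) (odd (i %/ 2)) (odd (i %/ 4)) (odd (i %/ 8)).
have Finj : forall e0 e1 e2 e3 f0 f1 f2 f3, F e0 e1 e2 e3 = F f0 f1 f2 f3 ->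
    (e0, e1, e2, e3) = (f0, f1, f2, f3).
  move=> e0 e1 e2 e3 f0 f1 f2 f3 E.
  have : F (e0 (+) f0) (e1 (+) f1) (e2 (+) f2) (e3 (+) f3) = 1.
    by rewrite -Fmul E Fmul !addbb F0.
  by move/nz; rewrite !negb_add => /and4P [/eqP -> /eqP -> /eqP -> /eqP ->].
have finj : injective f by move=> i j /Finj E; apply: bits_inj.
have fsurj : forall g, exists i, f i = g.
  move=> g; have [e0 [e1 [e2 [e3 ->]]]] := surj g.
  have hn : (e0 + 2 * e1 + 4 * e2 + 8 * e3 < 16)%N by case: e0; case: e1; case: e2; case: e3.
  exists (Ordinal hn); rewrite /f /=; clear hn.
  by congr F; case: e0; case: e1; case: e2; case: e3.
exists f; exists (fun g => odflt ord0 [pick i | f i == g]).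
- move=> i; case: pickP => [j /eqP /finj //| /(_ i)]; by rewrite eqxx.
- move=> g; have [i hi] := fsurj g; case: pickP => [j /eqP //| /(_ i)]; by rewrite hi eqxx.
Qed.

End Abs.

Section Main.
Variables (P : finType) (L : {set {set P}}) (t : nat) (R : groupType) (r : P -> R).
Hypothesis hGQ : is_GQ2 L t.
Hypothesis hRep : is_representation L r.
Hypothesis hF : faithful r.

Local Notation coll := (collinear L).

Lemma r_inj : injective r.
Proof. move=> x y e; apply: hF => g; by rewrite !inE e. Qed.

Lemma rr x : r x * r x = 1.
Proof. by case: hRep => h _ _; case: (h x). Qed.

Lemma r_neq1 x : r x != 1.
Proof. by case: hRep => h _ _; case: (h x). Qed.

Lemma rV x : (r x)^-1 = r x.
Proof. exact: mulg1_eq (rr x). Qed.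

Definition third (u v w : P) :=
  [&& [set u; v; w] \in L, u != v, v != w & u != w].

Lemma set3C12 (u v w : P) : [set u; v; w] = [set v; u; w].
Proof. apply/setP => z; rewrite !inE; by do 3 case: eqP. Qed.
Lemma set3C23 (u v w : P) : [set u; v; w] = [set u; w; v].
Proof. apply/setP => z; rewrite !inE; by do 3 case: eqP. Qed.

Lemma third12 u v w : third u v w -> third v u w.
Proof. by case/and4P => H1 H2 H3 H4; rewrite /third -set3C12 H1 eq_sym H2 H4 H3. Qed.
Lemma third23 u v w : third u v w -> third u w v.
Proof. by case/and4P => H1 H2 H3 H4; rewrite /third -set3C23 H1 H4 eq_sym H3 H2. Qed.
Lemma third13 u v w : third u v w -> third w v u.
Proof. by move=> h; apply: third12; apply: third23; apply: third12. Qed.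

Lemma third_rel u v w : third u v w -> r u * r v = r w.
Proof.
case/and4P => hl huv hvw huw.
case: hRep => hinv _ hk.
have hu := r_neq1 u; have hv := r_neq1 v.
case: (hk _ u v w hl erefl huv hvw huw) => /= hU hM _ _.
have := hM (r u) (r v); rewrite !inE !eqxx !orbT => /(_ isT isT).
move: hU; rewrite /= !inE !negb_or => /and4P [/and3P [h1 h2 h3] /andP [h4 h5] h6 _].
have ruv : r u != r v by apply/negP => /eqP /r_inj /eqP; rewrite (negbTE huv).
case/or4P => /eqP e //.
- by move: (rr u); rewrite -e => /(mulgI (r u)) /eqP; rewrite (negbTE ruv).
- by move: e; rewrite -{2}(mulg1 (r u)) => /mulgI /eqP; rewrite (negbTE hv).
- by move: e; rewrite -{2}(mul1g (r v)) => /mulIg /eqP; rewrite (negbTE hu).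
Qed.


Lemma prod_swap u v y : r u * r v = r y -> r v * r u = r y.
Proof. by move=> e; rewrite -(rV u) -(rV v) -invgM e rV. Qed.

Lemma third_unique u v w w' : third u v w -> third u v w' -> w = w'.
Proof. by move=> /third_rel h1 /third_rel h2; apply: r_inj; rewrite -h1 -h2. Qed.

Lemma coll_sym x y : coll x y = coll y x.
Proof.
rewrite /collinear eq_sym; congr (_ && _).
by apply/existsP/existsP => -[l /and3P [a b c]]; exists l; rewrite a c b.
Qed.

Lemma coll_neq x y : coll x y -> x != y.
Proof. by case/andP. Qed.

Lemma third_coll u v w : third u v w -> coll u v.
Proof.
case/and4P => hl huv _ _; rewrite /collinear huv; apply/existsP; exists [set u; v; w].
by rewrite hl !inE !eqxx !orbT.
Qed.

Lemma third_coll13 u v w : third u v w -> coll u w.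
Proof. by move/third23/third_coll. Qed.
Lemma third_coll23 u v w : third u v w -> coll v w.
Proof. by move/third12/third23/third_coll. Qed.

Lemma hl3 l : l \in L -> #|l| = 3.
Proof. by case: hGQ => h _ _ _ _; apply: h. Qed.
Lemma hpls l1 l2 x y : l1 \in L -> l2 \in L -> x != y ->
  x \in l1 -> y \in l1 -> x \in l2 -> y \in l2 -> l1 = l2.
Proof. by case: hGQ => _ _ h _ _; apply: h. Qed.
Lemma hgq x l : l \in L -> x \notin l -> #|[set y in l | coll x y]| = 1%N.
Proof. by case: hGQ => _ _ _ _ h; apply: h. Qed.
Lemma hlines x : #|[set l in L | x \in l]| = t.+1.
Proof. by case: hGQ => _ h _ _ _; apply: h. Qed.

Lemma two_on_line l x u v : l \in L -> x \notin l -> u \in l -> v \in l ->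
  u != v -> coll x u -> coll x v -> False.
Proof.
move=> hl hx hu hv huv hxu hxv.
have := hgq hl hx => /eqP; apply/negP; rewrite neq_ltn; apply/orP; right.
apply/card_gt1P; exists u, v; by rewrite !inE hu hv hxu hxv.
Qed.

Lemma on_line l x : l \in L -> x \notin l -> exists2 y, y \in l & coll x y.
Proof.
move=> hl hx; have := hgq hl hx => h.
have : [set y in l | coll x y] != set0 by rewrite -card_gt0 h.
by case/set0Pn => y; rewrite inE => /andP [h1 h2]; exists y.
Qed.

Lemma card_set3 (T : finType) (u v w : T) : u != v -> v != w -> u != w ->
  #|[set u; v; w]| = 3%N.
Proof. by move=> a b c; rewrite -setUA cardsU1 cards2 !inE negb_or a c b. Qed.

Lemma coll_third u v : coll u v -> exists w, third u v w.
Proof.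
case/andP => huv /existsP [l /and3P [hl hu hv]].
have h3 := hl3 hl.
have : (0 < #|l :\ u :\ v|)%N.
  move: (cardsD1 u l) (cardsD1 v (l :\ u)); rewrite hu h3 !inE hv eq_sym huv /=.
  move=> e1 e2; move: e1; rewrite e2 => -[]; by case: #|_|.
case/card_gt0P => w; rewrite !inE => /and3P [hwv hwu hw].
exists w; rewrite /third huv eq_sym hwv eq_sym hwu.
suff -> : [set u; v; w] = l by rewrite hl.
apply/eqP; rewrite eqEcard hl3 //; apply/andP; split.
  by apply/subsetP => z; rewrite !inE => /orP [/orP [] | ] /eqP ->.
by rewrite card_set3 // eq_sym.
Qed.


Lemma triangle a b c : coll a b -> coll b c -> coll a c -> third a b c.
Proof.
move=> hab hbc hac; have [w hw] := coll_third hab.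
have hl : [set a; b; w] \in L by case/and4P: hw.
case hc : (c \in [set a; b; w]).
  move: hc; rewrite !inE => /orP [/orP [] | ] /eqP e.
  - by move: (coll_neq hac); rewrite e eqxx.
  - by move: (coll_neq hbc); rewrite e eqxx.
  - by rewrite -e in hw.
exfalso; apply: (two_on_line hl (negbT hc) (u := a) (v := b)).
- by rewrite !inE eqxx.
- by rewrite !inE eqxx orbT.
- exact: coll_neq hab.
- by rewrite coll_sym.
- by rewrite coll_sym.
Qed.

Lemma gq2 u v w x : third u v w -> x != u -> x != v -> x != w ->
  [|| coll x u, coll x v | coll x w].
Proof.
move=> hw hxu hxv hxw.
have hl : [set u; v; w] \in L by case/and4P: hw.
have [|y] := on_line (x := x) hl; first by rewrite !inE !negb_or hxu hxv hxw.
by rewrite !inE => /orP [/orP [] | ] /eqP -> ->; rewrite ?orbT.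
Qed.

Lemma lemB u v y : r u * r v = r y -> coll u y -> third u y v.
Proof.
move=> e huy; have [w hw] := coll_third huy.
suff <- : w = v by [].
apply: r_inj; rewrite -(third_rel hw) -e mulgA rr mul1g //.
Qed.

Lemma notB u v y : r u * r v = r y -> ~~ coll u v -> ~~ coll u y.
Proof. by move=> e huv; apply/negP => /(lemB e) /third_coll13; apply/negP. Qed.
Lemma notB2 u v y : r u * r v = r y -> ~~ coll u v -> ~~ coll v y.
Proof. by move=> /prod_swap e huv; apply: (notB e); rewrite coll_sym. Qed.

Lemma neq_prod u v y : r u * r v = r y -> u != y.
Proof.
move=> e; apply/eqP => E; move: e; rewrite E -{2}(mulg1 (r y)) => /mulgI /eqP.
by rewrite (negbTE (r_neq1 v)).
Qed.
Lemma neq_prod2 u v y : r u * r v = r y -> v != y.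
Proof. by move/prod_swap/neq_prod. Qed.

Lemma lemC p q y z : ~~ coll p q -> r p * r q = r y ->
  coll z p -> coll z q -> coll z y.
Proof.
move=> hpq e hzp hzq; apply/negPn/negP => hzy.
have [p' hp] : exists w, third p z w by apply: coll_third; rewrite coll_sym.
have [q' hq] : exists w, third q z w by apply: coll_third; rewrite coll_sym.
have e1 : r p' * r q' = r y.
  rewrite -(third_rel hp) -(prod_swap (third_rel hq)) -e.
  by rewrite -mulgA (mulgA (r z)) rr mul1g.
have hyp := notB e hpq.
have hyp' : ~~ coll y p by rewrite coll_sym.
have hyz : y != z by apply/eqP => E; move: hyp'; rewrite E hzp.
have hpp' := third_coll13 hp.
have hyp'' : y != p' by apply/eqP => E; move: hyp; rewrite E hpp'.
have : coll y p'.
  have := gq2 hp (x := y); rewrite eq_sym (neq_prod e) hyz hyp'' /= => /(_ isT isT isT).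
  by rewrite (negbTE hyp') coll_sym (negbTE hzy) coll_sym.
rewrite coll_sym => /(lemB e1) /third_coll13 hp'q'.
have h1 := triangle (third_coll23 hp) hp'q' (third_coll23 hq).
have h2 : third z p' p by apply: third23; apply: third12.
rewrite (third_unique h1 h2) in hq.
by move: hpq; rewrite coll_sym (third_coll13 hq).
Qed.

Definition perp p q := [set z | coll p z && coll q z].

Lemma coll_line x y l : l \in L -> x \in l -> y \in l -> x != y -> coll x y.
Proof. by move=> hl hx hy hxy; rewrite /collinear hxy; apply/existsP; exists l; rewrite hl hx hy. Qed.

Lemma perp_card p q : p != q -> ~~ coll p q -> #|perp p q| = t.+1.
Proof.
move=> hpq hc.
pose S := [set l in L | p \in l].
pose f (l : {set P}) := odflt p [pick y in l | coll q y].
have hf : forall l, l \in S -> (f l \in l) && coll q (f l).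
  move=> l; rewrite inE => /andP [hl hp].
  have hq : q \notin l.
    by apply/negP => hq; move: hc; rewrite (coll_line hl hp hq hpq).
  have [y hy hqy] := on_line hl hq.
  rewrite /f; case: pickP => [z /= -> //|/(_ y)]; by rewrite hy hqy.
have hfp : forall l, l \in S -> f l != p.
  move=> l /hf /andP [_ h]; apply/eqP => E; move: hc; by rewrite coll_sym -E h.
have -> : perp p q = f @: S.
  apply/setP => z; apply/idP/idP.
  - rewrite inE => /andP [hpz hqz].
    case/andP: (hpz) => hpz' /existsP [l /and3P [hl hp hz]].
    apply/imsetP; exists l; first by rewrite inE hl hp.
    have hlS : l \in S by rewrite inE hl hp.
    have hq : q \notin l.
      by apply/negP => hq; move: hc; rewrite (coll_line hl hp hq hpq).
    have := hgq hl hq => /eqP; rewrite eqn_leq => /andP [/card_le1_eqP h _].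
    apply: h; rewrite inE ?hz ?hqz //.
    by case/andP: (hf l hlS) => -> ->.
  - case/imsetP => l hl ->; rewrite inE; case/andP: (hf l hl) => h1 ->.
    move: hl; rewrite inE => /andP [hl hp].
    by rewrite (coll_line hl hp h1) // eq_sym hfp // inE hl hp.
rewrite card_in_imset ?hlines //.
move=> l1 l2 h1 h2 e.
have := h1; have := h2; rewrite !inE => /andP [hl2 hp2] /andP [hl1 hp1].
apply: (hpls hl1 hl2 (x := p) (y := f l1)) => //.
- by rewrite eq_sym hfp.
- by case/andP: (hf l1 h1).
- by rewrite e; case/andP: (hf l2 h2).
Qed.

Lemma third_231 u v w : third u v w -> third v w u.
Proof. by move=> h; apply: third23; apply: third12. Qed.

Lemma lemE a b c x u : a != b -> ~~ coll a c -> ~~ coll b c ->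
  r a * r b * r c = r x -> coll u a -> coll u b -> ~~ coll u c -> coll x c.
Proof.
move=> hab hac hbc e hua hub huc.
have [a' ha] : exists w, third a u w by apply: coll_third; rewrite coll_sym.
have [b' hb] : exists w, third b u w by apply: coll_third; rewrite coll_sym.
have hcu : c != u by apply/eqP => E; move: hua; rewrite -E coll_sym (negbTE hac).
have hca : c != a by apply/eqP => E; move: huc; rewrite E hua.
have hcb : c != b by apply/eqP => E; move: huc; rewrite E hub.
have hca' : coll c a'.
  have := gq2 ha (x := c); rewrite hca hcu.
  have -> : c != a' by apply/eqP => E; move: hac; rewrite E (third_coll13 ha).
  by move=> /(_ isT isT isT); rewrite coll_sym (negbTE hac) coll_sym (negbTE huc).
have hcb' : coll c b'.
  have := gq2 hb (x := c); rewrite hcb hcu.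
  have -> : c != b' by apply/eqP => E; move: hbc; rewrite E (third_coll13 hb).
  by move=> /(_ isT isT isT); rewrite coll_sym (negbTE hbc) coll_sym (negbTE huc).
have [w hw] : exists w, third b' c w by apply: coll_third; rewrite coll_sym.
have e1 : r a' * r w = r x.
  rewrite -(third_rel hw) -(third_rel ha) -(prod_swap (third_rel hb)) -e.
  by rewrite !mulgA -(mulgA (r a)) rr mulg1.
have haw : a' != w.
  apply/eqP => E; move: e1; rewrite E rr => /esym /eqP; by rewrite (negbTE (r_neq1 x)).
have hnaw : ~~ coll a' w.
  apply/negP => h.
  have h1' : third c w a' by apply: triangle (third_coll23 hw) _ hca'; rewrite coll_sym.
  have h2 : third c w b' by apply: third23; apply: third12.
  move: (third_unique h1' h2) => E; rewrite -E in hb.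
  by move: hab; rewrite (third_unique (third_231 ha) (third_231 hb)) eqxx.
rewrite coll_sym; exact: lemC hnaw e1 hca' (third_coll23 hw).
Qed.

Lemma perp_ncoll p q z1 z2 : p != q -> z1 \in perp p q -> z2 \in perp p q ->
  ~~ coll z1 z2.
Proof.
move=> hpq; rewrite !inE => /andP [h1 h2] /andP [h3 h4]; apply/negP => h.
have t1 := triangle h1 h h3; have t2 := triangle h2 h h4.
by move: hpq; rewrite (third_unique (third_231 t1) (third_231 t2)) eqxx.
Qed.

Lemma t_pos p q : p != q -> ~~ coll p q -> (0 < t)%N.
Proof.
move=> hpq hc; have := perp_card hpq hc.
have [z hz] : exists z, z \in perp p q by apply/set0Pn; rewrite -card_gt0 perp_card.
move=> _; move: hz; rewrite inE => /andP [hpz hqz].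
case/andP: hpz => _ /existsP [l1 /and3P [hl1 hp1 hz1]].
case/andP: hqz => _ /existsP [l2 /and3P [hl2 hq2 hz2]].
have : (1 < #|[set l in L | z \in l]|)%N.
  apply/card_gt1P; exists l1, l2; rewrite !inE hl1 hl2 hz1 hz2; split => //.
  apply/eqP => E; move: hc; by rewrite (coll_line hl1 hp1 _ hpq) // E.
by rewrite hlines.
Qed.

Lemma perp_two p q : p != q -> ~~ coll p q ->
  exists z1 z2, [/\ z1 \in perp p q, z2 \in perp p q & z1 != z2].
Proof.
move=> hpq hc; have ht := t_pos hpq hc.
have : (1 < #|perp p q|)%N by rewrite perp_card.
by case/card_gt1P => z1 [z2 [h1 h2 h3]]; exists z1, z2.
Qed.

Lemma prod_thirds p q z p' q' : third p z p' -> third q z q' ->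
  r p' * r q' = r p * r q.
Proof.
move=> hp hq; rewrite -(third_rel hp) -(prod_swap (third_rel hq)).
by rewrite -mulgA (mulgA (r z)) rr mul1g.
Qed.

Lemma ncoll_thirds p q z p' q' : ~~ coll p q -> third p z p' -> third q z q' ->
  ~~ coll p' q'.
Proof.
move=> hpq hp hq; apply/negP => hp'q'.
have h1 := triangle (third_coll23 hp) hp'q' (third_coll23 hq).
have h2 : third z p' p by apply: third23; apply: third12.
rewrite (third_unique h1 h2) in hq.
by move: hpq; rewrite coll_sym (third_coll13 hq).
Qed.

Lemma n0 p q y w z : ~~ coll p q -> r p * r q = r y ->
  ~~ coll w p -> ~~ coll w q -> ~~ coll w y -> w != p -> w != q ->
  z \in perp p q -> w != z -> coll w z.
Proof.
move=> hpq e hwp hwq hwy hwp' hwq' hz hwz; apply/negPn/negP => hwz'.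
move: hz; rewrite inE => /andP [hpz hqz].
have [p' hp] := coll_third hpz.
have [q' hq] := coll_third hqz.
have hwp'' : coll w p'.
  have := gq2 hp (x := w); rewrite hwp' hwz.
  have -> : w != p' by apply/eqP => E; move: hwp; rewrite E coll_sym (third_coll13 hp).
  by move=> /(_ isT isT isT); rewrite (negbTE hwp) (negbTE hwz').
have hwq'' : coll w q'.
  have := gq2 hq (x := w); rewrite hwq' hwz.
  have -> : w != q' by apply/eqP => E; move: hwq; rewrite E coll_sym (third_coll13 hq).
  by move=> /(_ isT isT isT); rewrite (negbTE hwq) (negbTE hwz').
have e1 : r p' * r q' = r y by rewrite (prod_thirds hp hq).
have hpq' : ~~ coll p' q'.
  exact: ncoll_thirds hpq hp hq.
by move: hwy; rewrite (lemC hpq' e1 hwp'' hwq'').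
Qed.


Lemma linesZ p q y z1 z2 l : p != q -> ~~ coll p q -> r p * r q = r y ->
  z1 \in perp p q -> z2 \in perp p q -> z1 != z2 -> l \in L -> z1 \in l ->
  [|| p \in l, q \in l | y \in l].
Proof.
move=> hpq' hpq e hz1 hz2 hz12 hl hz1l.
apply/negPn/negP; rewrite !negb_or => /and3P [hp hq hy].
have hnz := perp_ncoll hpq' hz1 hz2.
have := hz1; rewrite inE => /andP [hpz1 hqz1].
have hyz1 : coll y z1 by rewrite coll_sym; apply: lemC hpq e _ _; rewrite coll_sym.
have hz2l : z2 \notin l.
  by apply/negP => h; move: hnz; rewrite (coll_line hl hz1l h hz12).
have key : forall w, w \in l -> w != z1 -> coll w z2.
  move=> w hw hwz.
  have hwp : ~~ coll w p.
    apply/negP => h; apply: (two_on_line hl hp hz1l hw) => //.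
      by rewrite eq_sym.
    by rewrite coll_sym.
  have hwq : ~~ coll w q.
    apply/negP => h; apply: (two_on_line hl hq hz1l hw) => //.
      by rewrite eq_sym.
    by rewrite coll_sym.
  have hwy : ~~ coll w y.
    apply/negP => h; apply: (two_on_line hl hy hz1l hw) => //.
      by rewrite eq_sym.
    by rewrite coll_sym.
  have hwp' : w != p by apply/eqP => E; move: hp; rewrite -E hw.
  have hwq' : w != q by apply/eqP => E; move: hq; rewrite -E hw.
  have hwz2 : w != z2 by apply/eqP => E; move: hz2l; rewrite -E hw.
  exact: n0 hpq e hwp hwq hwy hwp' hwq' hz2 hwz2.
have : (1 < #|l :\ z1|)%N.
  by move: (cardsD1 z1 l); rewrite hz1l hl3 // add1n => -[<-].
case/card_gt1P => w [w' [hw hw' hww']].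
move: hw hw'; rewrite !inE => /andP [hw1 hw2] /andP [hw1' hw2'].
apply: (two_on_line hl hz2l hw2 hw2' hww'); rewrite coll_sym; exact: key.
Qed.

Lemma t_eq2 p q y : p != q -> ~~ coll p q -> r p * r q = r y -> t = 2%N.
Proof.
move=> hpq' hpq e.
have [z1 [z2 [hz1 hz2 hz12]]] := perp_two hpq' hpq.
have := hz1; rewrite inE => /andP [hpz1 hqz1].
have hyz1 : coll z1 y by apply: lemC hpq e _ _; rewrite coll_sym.
have [p1 hp1] : exists w, third z1 p w by apply: coll_third; rewrite coll_sym.
have [q1 hq1] : exists w, third z1 q w by apply: coll_third; rewrite coll_sym.
have [y1 hy1] : exists w, third z1 y w by apply: coll_third.
set lp := [set z1; p; p1]; set lq := [set z1; q; q1]; set ly := [set z1; y; y1].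
have hlp : lp \in L by case/and4P: hp1.
have hlq : lq \in L by case/and4P: hq1.
have hly : ly \in L by case/and4P: hy1.
have in1 : forall a b c : P, a \in [set a; b; c] by move=> *; rewrite !inE eqxx.
have in2 : forall a b c : P, b \in [set a; b; c] by move=> *; rewrite !inE eqxx !orbT.
have hS : [set l in L | z1 \in l] = [set lp; lq; ly].
  apply/setP => l; rewrite !inE; apply/andP/idP.
  - case=> hl hz1l.
    case/or3P: (linesZ hpq' hpq e hz1 hz2 hz12 hl hz1l) => h.
    + apply/orP; left; apply/orP; left; apply/eqP.
      apply: (hpls hl hlp (x := z1) (y := p)) => //; rewrite ?in1 ?in2 // eq_sym; exact: coll_neq hpz1.
    + apply/orP; left; apply/orP; right; apply/eqP.
      apply: (hpls hl hlq (x := z1) (y := q)) => //; rewrite ?in1 ?in2 // eq_sym; exact: coll_neq hqz1.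
    + apply/orP; right; apply/eqP.
      apply: (hpls hl hly (x := z1) (y := y)) => //; rewrite ?in1 ?in2 //; exact: coll_neq hyz1.
  - by move=> /orP [/orP [] | ] /eqP ->; split => //; rewrite /lp /lq /ly in1.
have n1 : lp != lq.
  apply/eqP => E; move: hpq; rewrite (coll_line hlp (in2 _ _ _) _ (hpq')) //.
  by rewrite E in2.
have n2 : lq != ly.
  apply/eqP => E; move: (notB2 e hpq); rewrite (coll_line hlq (in2 _ _ _) _) //.
  + by rewrite E in2.
  + by rewrite (neq_prod2 e).
have n3 : lp != ly.
  apply/eqP => E; move: (notB e hpq); rewrite (coll_line hlp (in2 _ _ _) _) //.
  + by rewrite E in2.
  + by rewrite (neq_prod e).
by move: (hlines z1); rewrite hS card_set3 // => -[<-].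
Qed.

Lemma card3_eq (T : finType) (A : {set T}) x y z w : #|A| = 3%N ->
  x \in A -> y \in A -> z \in A -> x != y -> y != z -> x != z -> w \in A ->
  [|| w == x, w == y | w == z].
Proof.
move=> hA hx hy hz hxy hyz hxz hw.
have hs : [set x; y; z] \subset A.
  by apply/subsetP => u; rewrite !inE => /orP [/orP [] | ] /eqP ->.
have := subset_cardP (etrans (card_set3 hxy hyz hxz) (esym hA)) hs.
by move=> /(_ w); rewrite hw !inE -orbA.
Qed.

Lemma through3 s z1 z2 z3 w : t = 2%N ->
  coll s z1 -> coll s z2 -> coll s z3 ->
  ~~ coll z1 z2 -> ~~ coll z2 z3 -> ~~ coll z1 z3 ->
  z1 != z2 -> z2 != z3 -> z1 != z3 -> coll s w ->
  [\/ w = z1, w = z2, w = z3 | 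
      [\/ r w = r s * r z1, r w = r s * r z2 | r w = r s * r z3]].
Proof.
move=> ht h1 h2 h3 n12 n23 n13 d12 d23 d13 hsw.
have [s1 t1] := coll_third h1.
have [s2 t2] := coll_third h2.
have [s3 t3] := coll_third h3.
have hl1 : [set s; z1; s1] \in L by case/and4P: t1.
have hl2 : [set s; z2; s2] \in L by case/and4P: t2.
have hl3' : [set s; z3; s3] \in L by case/and4P: t3.
have in1 : forall a b c : P, a \in [set a; b; c] by move=> *; rewrite !inE eqxx.
have in2 : forall a b c : P, b \in [set a; b; c] by move=> *; rewrite !inE eqxx !orbT.
have neql : forall a b c a' b' c' : P, ~~ coll b b' -> b != b' ->
    [set a; b; c] \in L -> b' \in [set a'; b'; c'] -> [set a; b; c] != [set a'; b'; c'].
  move=> a b c a' b' c' hn hne hl hb; apply/negP => /eqP E; move: hn.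
  by rewrite (coll_line hl (in2 _ _ _) _ hne) // E.
case/andP: hsw => hsw' /existsP [l /and3P [hl hsl hwl]].
have hS : #|[set l in L | s \in l]| = 3%N by rewrite hlines ht.
have m1 : [set s; z1; s1] \in [set l in L | s \in l] by rewrite inE hl1 in1.
have m2 : [set s; z2; s2] \in [set l in L | s \in l] by rewrite inE hl2 in1.
have m3 : [set s; z3; s3] \in [set l in L | s \in l] by rewrite inE hl3' in1.
have ml : l \in [set l in L | s \in l] by rewrite inE hl hsl.
have := card3_eq hS m1 m2 m3 (neql _ _ _ _ _ _ n12 d12 hl1 (in2 _ _ _))
  (neql _ _ _ _ _ _ n23 d23 hl2 (in2 _ _ _)) (neql _ _ _ _ _ _ n13 d13 hl1 (in2 _ _ _)) ml.
have hws : w != s by rewrite eq_sym.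
case/or3P => /eqP E; move: hwl; rewrite E !inE (negbTE hws) /=.
- by case/orP => /eqP ->; [constructor 1 | constructor 4; constructor 1; rewrite (third_rel t1)].
- by case/orP => /eqP ->; [constructor 2 | constructor 4; constructor 2; rewrite (third_rel t2)].
- by case/orP => /eqP ->; [constructor 3 | constructor 4; constructor 3; rewrite (third_rel t3)].
Qed.

Lemma coll_comm u v : coll u v -> commute (r u) (r v).
Proof.
by case/coll_third => w hw; rewrite /commute (third_rel hw) (third_rel (third12 hw)).
Qed.

Lemma prod_perp p q y z1 z2 : p != q -> ~~ coll p q -> r p * r q = r y ->
  z1 \in perp p q -> z2 \in perp p q -> z1 != z2 -> exists z3, r z1 * r z2 = r z3.
Proof.
move=> hpq' hpq e hz1 hz2 hz12.
have n12 := perp_ncoll hpq' hz1 hz2.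
have := hz1; rewrite inE => /andP [hpz1 hqz1].
have := hz2; rewrite inE => /andP [hpz2 hqz2].
have [p1 hp] := coll_third hpz1.
have [q2 hq] := coll_third hqz2.
have hyz1 : coll z1 y by apply: lemC hpq e _ _; rewrite coll_sym.
have hyz2 : coll z2 y by apply: lemC hpq e _ _; rewrite coll_sym.
have hq2p1 : coll q2 p1.
  have := gq2 hp (x := q2).
  have -> : q2 != p.
    by apply/eqP => E; move: hpq; rewrite coll_sym -E (third_coll13 hq).
  have -> : q2 != z1.
    by apply/eqP => E; move: n12; rewrite coll_sym -E (third_coll23 hq).
  have -> : q2 != p1.
    apply/eqP => E; rewrite -E in hp.
    have t1 : third p q2 z2.
      by apply: triangle (third_coll13 hp) _ hpz2; rewrite coll_sym (third_coll23 hq).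
    by move: hz12; rewrite (third_unique (third23 hp) t1) eqxx.
  move=> /(_ isT isT isT) /or3P [] // h.
  + have t1 := triangle (third_coll23 hq) h _.
    have t2 : third z2 q2 p by apply: t1; rewrite coll_sym.
    have t3 : third z2 q2 q by apply: third23; apply: third12.
    by move: hpq'; rewrite (third_unique t2 t3) eqxx.
  + have t1 := triangle (third_coll13 hq) h hqz1.
    by move: hz12; rewrite (third_unique t1 (third23 hq)) eqxx.
have [w hw] : exists w, third p1 q2 w by apply: coll_third; rewrite coll_sym.
have ew : r w = r y * (r z1 * r z2).
  rewrite -(third_rel hw) -(third_rel hp) -(third_rel hq) -e.
  rewrite !mulgA; congr (_ * _); rewrite -!mulgA; congr (_ * _).
  by rewrite (coll_comm (hqz1 : coll q z1)).
have hyw : coll y w.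
  have := gq2 hw (x := y).
  have -> : y != q2.
    by apply/eqP => E; move: (notB2 e hpq); rewrite E (third_coll13 hq).
  have -> : y != p1.
    by apply/eqP => E; move: (notB e hpq); rewrite E (third_coll13 hp).
  have -> : y != w.
    apply/eqP => E; move: ew; rewrite -E -{1}(mulg1 (r y)) => /mulgI /esym.
    move/mulg1_eq; rewrite rV => /r_inj E'; by move: hz12; rewrite E' eqxx.
  move=> /(_ isT isT isT) /or3P [] // h.
  + have t1 : third z1 p1 y by apply: triangle (third_coll23 hp) _ hyz1; rewrite coll_sym.
    by move: (neq_prod e); rewrite (third_unique t1 (third_231 hp)) eqxx.
  + have t1 : third z2 q2 y by apply: triangle (third_coll23 hq) _ hyz2; rewrite coll_sym.
    by move: (neq_prod2 e); rewrite (third_unique t1 (third_231 hq)) eqxx.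
have [v hv] := coll_third hyw.
exists v; by rewrite -(third_rel hv) ew mulgA rr mul1g.
Qed.

Ltac solveH := solve [ (exists true + exists false); (exists true + exists false);
  (exists true + exists false); (exists true + exists false);
  rewrite /F /pw /= ?mulg1 ?mul1g; reflexivity ].

Lemma order_R p q y : p != q -> ~~ coll p q -> r p * r q = r y -> has_order R 16.
Proof.
move=> hpq' hpq e.
have ht := t_eq2 hpq' hpq e.
have [z1 [z2 [hz1 hz2 hz12]]] := perp_two hpq' hpq.
have [z3 e3] := prod_perp hpq' hpq e hz1 hz2 hz12.
have n12 := perp_ncoll hpq' hz1 hz2.
have := hz1; rewrite inE => /andP [hpz1 hqz1].
have := hz2; rewrite inE => /andP [hpz2 hqz2].
have hpz3 : coll p z3 := lemC n12 e3 hpz1 hpz2.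
have hqz3 : coll q z3 := lemC n12 e3 hqz1 hqz2.
have hyz : forall z, coll p z -> coll q z -> coll y z.
  by move=> z h1 h2; rewrite coll_sym; apply: lemC hpq e _ _; rewrite coll_sym.
have hyz1 := hyz _ hpz1 hqz1.
have hyz2 := hyz _ hpz2 hqz2.
have hyz3 := hyz _ hpz3 hqz3.
have n13 := notB e3 n12.
have n23 := notB2 e3 n12.
have d13 := neq_prod e3.
have d23 := neq_prod2 e3.
have cab : commute (r p) (r q) by rewrite /commute e (prod_swap e).
have ccd : commute (r z1) (r z2) by rewrite /commute e3 (prod_swap e3).
apply: (order16 (rr p) (rr q) (rr z1) (rr z2) cab (coll_comm hpz1) (coll_comm hpz2)
  (coll_comm hqz1) (coll_comm hqz2) ccd).
- have Fm := Fmul (rr p) (rr q) (rr z1) (rr z2) cab (coll_comm hpz1) (coll_comm hpz2)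
    (coll_comm hqz1) (coll_comm hqz2) ccd.
  have hpt : forall x, exists e0 e1 e2 e3,
      r x = F (r p) (r q) (r z1) (r z2) e0 e1 e2 e3.
    move=> x.
    case: (eqVneq x p) => [-> | hxp]; first solveH.
    case: (eqVneq x q) => [-> | hxq]; first solveH.
    case: (eqVneq x y) => [-> | hxy]; first by rewrite -e; solveH.
    case hcp : (coll p x).
      case: (through3 ht hpz1 hpz2 hpz3 n12 n23 n13 hz12 d23 d13 hcp)
        => [->|->|->|[]->]; rewrite -?e3 ?mulgA; solveH.
    case hcq : (coll q x).
      case: (through3 ht hqz1 hqz2 hqz3 n12 n23 n13 hz12 d23 d13 hcq)
        => [->|->|->|[]->]; rewrite -?e3 ?mulgA; solveH.
    case hcy : (coll y x).
      case: (through3 ht hyz1 hyz2 hyz3 n12 n23 n13 hz12 d23 d13 hcy)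
        => [->|->|->|[]->]; rewrite -?e3 -?e ?mulgA; solveH.
    case: (eqVneq x z1) => [-> | hxz1]; first solveH.
    have hc : coll x z1.
      by apply: (n0 hpq e) => //; rewrite coll_sym ?hcp ?hcq ?hcy.
    case/andP: hc => _ /existsP [l /and3P [hl hxl hz1l]].
    case/or3P: (linesZ hpq' hpq e hz1 hz2 hz12 hl hz1l) => h.
    + by move: hcp; rewrite (coll_line hl h hxl) // eq_sym.
    + by move: hcq; rewrite (coll_line hl h hxl) // eq_sym.
    + by move: hcy; rewrite (coll_line hl h hxl) // eq_sym.
  move=> g; case: hRep => _ hgen _.
  elim: (hgen g) => [x | | g1 g2 _ [a1 [a2 [a3 [a4 ->]]]] _ [b1 [b2 [b3 [b4 ->]]]]
    | g1 _ [a1 [a2 [a3 [a4 ->]]]]].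
  + exact: hpt.
  + solveH.
  + by rewrite Fm; do 4 eexists.
  + by exists a1, a2, a3, a4; apply: mulg1_eq; rewrite Fm !addbb /F /pw /= !mulg1.
- have [p1 hp1] := coll_third hpz1.
  have [p2 hp2] := coll_third hpz2.
  have [p3 hp3] := coll_third hpz3.
  have [q1 hq1] := coll_third hqz1.
  have [q2 hq2] := coll_third hqz2.
  have [q3 hq3] := coll_third hqz3.
  have [y1 hy1] := coll_third hyz1.
  have [y2 hy2] := coll_third hyz2.
  have [y3 hy3] := coll_third hyz3.
  move=> [] [] [] []; rewrite /F /pw /= ?mulg1 ?mul1g ?e -?mulgA ?e3
    ?(third_rel hp1) ?(third_rel hp2) ?(third_rel hp3)
    ?(third_rel hq1) ?(third_rel hq2) ?(third_rel hq3)
    ?(third_rel hy1) ?(third_rel hy2) ?(third_rel hy3) => // /eqP;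
    by rewrite (negbTE (r_neq1 _)).
Qed.

Lemma rotC u v w x : r u * r v * r w = r x -> r w * r v * r u = r x.
Proof. by move=> e; rewrite -(rV u) -(rV v) -(rV w) -!invgM mulgA e rV. Qed.

Lemma rotA u v w x : r u * r v * r w = r x -> r v * r u * r x = r w.
Proof.
move=> e; rewrite -e !mulgA -(mulgA (r v) (r u) (r u)) rr mulg1 rr mul1g //.
Qed.

Lemma rotB u v w x : r u * r v * r w = r x -> r w * r x * r u = r v.
Proof.
move=> e; have e' : r u * r x * r w = r v.
  by rewrite -e !mulgA rr mul1g -mulgA rr mulg1.
exact: rotC e'.
Qed.

Lemma caseZ a b c x z z' : a != b -> a != c -> b != c ->
  ~~ coll a c -> ~~ coll b c -> ~~ coll c x ->
  r a * r b * r c = r x -> z \in perp a b -> z' \in perp a b -> z != z' ->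
  coll z c -> coll z' c -> coll z x -> False.
Proof.
move=> hab hac hbc nac nbc ncx e hz hz' hzz' hzc hz'c hzx.
have := hz; rewrite inE => /andP [haz hbz].
have := hz'; rewrite inE => /andP [haz' hbz'].
have [cz tc] : exists w, third c z w by apply: coll_third; rewrite coll_sym.
have [xz tx] : exists w, third x z w by apply: coll_third; rewrite coll_sym.
have e1 : r a * r b * r cz = r xz.
  by rewrite -(third_rel tc) -(third_rel tx) -e !mulgA.
have nacz : ~~ coll a cz.
  apply/negP => h.
  have t1 : third z a cz by apply: triangle _ h (third_coll23 tc); rewrite coll_sym.
  have t2 : third z cz c by apply: third23; apply: third12.
  by move: hac; rewrite (third_unique (third23 t1) t2) eqxx.
have nbcz : ~~ coll b cz.
  apply/negP => h.
  have t1 : third z b cz by apply: triangle _ h (third_coll23 tc); rewrite coll_sym.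
  have t2 : third z cz c by apply: third23; apply: third12.
  by move: hbc; rewrite (third_unique (third23 t1) t2) eqxx.
have nz'cz : ~~ coll z' cz.
  apply/negP => h.
  have t1 : third c z' cz by apply: triangle _ h (third_coll13 tc); rewrite coll_sym.
  by move: hzz'; rewrite (third_unique (third23 t1) (third23 tc)) eqxx.
have hxc : coll xz cz.
  by apply: (lemE hab nacz nbcz e1 _ _ nz'cz); rewrite coll_sym.
have t1 := triangle (third_coll23 tx) hxc (third_coll23 tc).
rewrite (third_unique t1 (third_231 tx)) in tc.
by move: ncx; rewrite (third_coll13 tc).
Qed.

Lemma main1 a b c x : a != b -> ~~ coll a b -> ~~ coll a c -> ~~ coll b c ->
  r a * r b * r c = r x -> coll x c ->
  [/\ t = 2%N, has_order R 16 &
     (exists d, [/\ ~~ coll a d, ~~ coll b d, ~~ coll c d & [/\ d != a, d != b & d != c]])].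
Proof.
move=> hab nab nac nbc e hxc.
have [c' tc] := coll_third hxc.
have e1 : r a * r b = r c'.
  by rewrite -(third_rel tc) -e -mulgA rr mulg1.
split; first exact: t_eq2 hab nab e1.
  exact: order_R hab nab e1.
have [z1 [z2 [hz1 hz2 hz12]]] := perp_two hab nab.
have hzc : forall z, z \in perp a b -> coll z c -> z = x.
  move=> z; rewrite inE => /andP [h1 h2] hzc.
  have hzc' : coll c' z.
    by rewrite coll_sym; apply: lemC nab e1 _ _; rewrite coll_sym.
  have t1 : third c c' z by apply: triangle (third_coll23 tc) hzc' _; rewrite coll_sym.
  exact: third_unique t1 (third_231 tc).
have [u hu nuc] : exists2 u, u \in perp a b & ~~ coll u c.
  case h1 : (coll z1 c); last by exists z1; rewrite ?h1.
  case h2 : (coll z2 c); last by exists z2; rewrite ?h2.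
  by move: hz12; rewrite (hzc _ hz1 h1) (hzc _ hz2 h2) eqxx.
have := hu; rewrite inE => /andP [hau hbu].
have huc' : coll c' u.
  by rewrite coll_sym; apply: lemC nab e1 _ _; rewrite coll_sym.
have [d td] := coll_third huc'.
have nac' := notB e1 nab.
have nbc' := notB2 e1 nab.
have huc0 : u != c by apply/eqP => E; move: nac; rewrite -E hau.
exists d; split; last split.
- apply/negP => h.
  have t1 := triangle hau (third_coll23 td) h.
  by move: (neq_prod e1); rewrite (third_unique (third_231 t1) (third_231 td)) eqxx.
- apply/negP => h.
  have t1 := triangle hbu (third_coll23 td) h.
  by move: (neq_prod2 e1); rewrite (third_unique (third_231 t1) (third_231 td)) eqxx.
- apply/negP => h.
  have t1 := triangle (third_coll23 tc) (third_coll13 td) h.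
  by move: huc0; rewrite (third_unique (third_231 t1) (third23 td)) eqxx.
- by apply/eqP => E; move: nac'; rewrite -E coll_sym (third_coll13 td).
- by apply/eqP => E; move: nbc'; rewrite -E coll_sym (third_coll13 td).
- by apply/eqP => E; move: nuc; rewrite -E (third_coll23 td).
Qed.

Lemma card3_distinct (a b c : P) : #|[set a; b; c]| = 3%N -> [/\ a != b, b != c & a != c].
Proof.
rewrite -setUA cardsU1 cards2 !inE negb_or.
by case: (a == b); case: (a == c); case: (b == c).
Qed.

Lemma not_complete a b c d : a != b -> b != c -> a != c ->
  ~~ coll a b -> ~~ coll b c -> ~~ coll a c ->
  ~~ coll a d -> ~~ coll b d -> ~~ coll c d -> d != a -> d != b -> d != c ->
  ~ complete_karc L 3 [set a; b; c].
Proof.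
move=> hab hbc hac nab nbc nac nad nbd ncd hda hdb hdc [_ H]; apply: H.
exists [set a; b; c; d]; split; last first.
  by apply/subsetP => z; rewrite !inE => ->.
split.
  move=> u v; rewrite !inE => hu hv huv.
  move: hu hv huv => /orP [/orP [/orP [] | ] | ] /eqP -> /orP [/orP [/orP [] | ] | ] /eqP ->;
  rewrite ?eqxx // => _; rewrite // coll_sym //.
rewrite setUC cardsU1 card_set3 // !inE.
by rewrite (negbTE hda) (negbTE hdb) (negbTE hdc).
Qed.

Lemma main_sec a b c x : is_karc L 3 [set a; b; c] -> r a * r b * r c = r x ->
  [/\ t = 2%N, has_order R 16 & ~ complete_karc L 3 [set a; b; c]].
Proof.
case=> harc hcard e.
have [hab hbc hac] := card3_distinct hcard.
have in1 : a \in [set a; b; c] by rewrite !inE eqxx.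
have in2 : b \in [set a; b; c] by rewrite !inE eqxx !orbT.
have in3 : c \in [set a; b; c] by rewrite !inE eqxx !orbT.
have nab := harc _ _ in1 in2 hab.
have nbc := harc _ _ in2 in3 hbc.
have nac := harc _ _ in1 in3 hac.
have hxa : x != a.
  apply/eqP => E; move: e; rewrite E -mulgA -{2}(mulg1 (r a)) => /mulgI /mulg1_eq.
  by rewrite rV => /r_inj E'; move: hbc; rewrite E' eqxx.
have hxc : x != c.
  apply/eqP => E; move: e; rewrite E -{2}(mul1g (r c)) => /mulIg /mulg1_eq.
  by rewrite rV => /r_inj E'; move: hab; rewrite E' eqxx.
have perp_c : forall z, z \in perp a b -> ~~ coll x c -> coll z c.
  move=> z; rewrite inE => /andP [h1 h2] nxc; apply/negPn/negP => h.
  by move: nxc; rewrite (lemE hab nac nbc e _ _ h) // coll_sym.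
have [z [z' [hz hz' hzz']]] := perp_two hab nab.
case: (eqVneq x b) => [E | hxb].
  rewrite E in e.
  exfalso; apply: (caseZ hab hac hbc nac nbc _ e hz hz' hzz').
  - by rewrite coll_sym.
  - by apply: perp_c => //; rewrite E.
  - by apply: perp_c => //; rewrite E.
  - by move: hz; rewrite inE => /andP [_]; rewrite coll_sym.
case cxc : (coll x c).
  have [h1 h2 [d [h3 h4 h5 [h6 h7 h8]]]] := main1 hab nab nac nbc e cxc.
  by split => //; apply: (not_complete hab hbc hac nab nbc nac h3 h4 h5 h6 h7 h8).
case cxa : (coll x a).
  have hcb : c != b by rewrite eq_sym.
  have ncb : ~~ coll c b by rewrite coll_sym.
  have nca : ~~ coll c a by rewrite coll_sym.
  have nba : ~~ coll b a by rewrite coll_sym.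
  have [h1 h2 [d [h3 h4 h5 [h6 h7 h8]]]] := main1 hcb ncb nca nba (rotC e) cxa.
  by split => //; apply: (not_complete hab hbc hac nab nbc nac h5 h4 h3 h8 h7 h6).
have nxc : ~~ coll x c by rewrite cxc.
have nxa : ~~ coll x a by rewrite cxa.
case cxb : (coll x b).
  exfalso.
  have hsub : perp a b \subset perp a c.
    apply/subsetP => u hu; move: (hu); rewrite !inE => /andP [-> _] /=.
    by rewrite coll_sym; apply: perp_c.
  have heq := subset_cardP (etrans (perp_card hab nab) (esym (perp_card hac nac))) hsub.
  have hcx : c != x by rewrite eq_sym.
  have ncx : ~~ coll c x by rewrite coll_sym.
  have [u [u' [hu hu' huu']]] := perp_two hcx ncx.
  have key : forall v, v \in perp c x -> coll b v.
    move=> v hv; move: (hv); rewrite inE => /andP [hcv hxv].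
    have hav : coll a v.
      apply/negPn/negP => h.
      have nca : ~~ coll c a by rewrite coll_sym.
      have := lemE hcx nca nxa (rotB e) (u := v).
      move=> H; have hba : coll b a by apply: H; rewrite coll_sym.
      by move: nab; rewrite coll_sym hba.
    have : v \in perp a c by rewrite inE hav.
    by rewrite -heq inE => /andP [].
  have := hu; rewrite inE => /andP [_ hxu].
  have := hu'; rewrite inE => /andP [_ hxu'].
  have t1 : third b x u by apply: triangle _ hxu (key _ hu); rewrite coll_sym.
  have t2 : third b x u' by apply: triangle _ hxu' (key _ hu'); rewrite coll_sym.
  by move: huu'; rewrite (third_unique t1 t2) eqxx.
have nxb : ~~ coll x b by rewrite cxb.
exfalso; apply: (caseZ hab hac hbc nac nbc _ e hz hz' hzz').
- by rewrite coll_sym.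
- exact: perp_c.
- exact: perp_c.
- move: hz; rewrite inE => /andP [h1 h2]; apply/negPn/negP => h.
  have := lemE (a := b) (b := a) (c := x) (x := c) (u := z).
  rewrite eq_sym hab coll_sym nxb coll_sym nxa (rotA e) => /(_ isT isT isT erefl) H.
  have hcx : coll c x by apply: H => //; rewrite coll_sym.
  by move: nxc; rewrite coll_sym hcx.
Qed.
End Main.

Unset Implicit Arguments.

Theorem lemma3p7 (P : finType) (L : {set {set P}}) (t : nat)
    (R : groupType) (r : P -> R) (a b c : P) :
  is_GQ2 L t ->
  is_representation L r ->
  faithful r ->
  is_karc L 3 [set a; b; c] ->
  (exists x : P, r a * r b * r c = r x) ->
  t = 2%N /\ has_order R 16 /\ ~ complete_karc L 3 [set a; b; c].
Proof.
move=> hG hR hF' hk [x e].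
by have [h1 h2 h3] := main_sec hG hR hF' hk e.
Qed.
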